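(* Let $(G_x)$ be the coclass family defined by $\eta\in H^3(P,T)$, $x\in\mathbb{N}_0$, and let $A = C_{L,x}(\gamma)\times O$ and $B$ be objects of $\mathcal{A}_p(G_x)$, where $L\in\mathcal{L}_\eta$, $\gamma\in Z^1(L,M_x)$, $O\in\mathcal{O}_x(L)$. Let $g=(w,m)$ and $g'=(w,m')$ be two elements of $G_x$ that each induce a morphism in $\mathrm{Hom}(A,B)$. Then $g$ and $g'$ induce the same morphism in $\mathrm{Hom}(A,B)$ if and only if $m-m'\in C_{M_x}(L)^w$, where $C_{M_x}(L)=\{n\in M_x\mid [n,l]=0 \text{ for all } l\in L\}$.
   Context: Conventions: normalised cocycles $Z^n$, coboundaries $B^n$, cohomology $H^n$ for right modules written additively; $\mathrm{Ext}(\tau)$ is $G\times M$ with $(g,m)(h,n)=(gh,m^h+n+\tau(g,h))$; for $n \in M_x$, $l\in P$, $[n,l] = n^l - n$. Setting: $S$ infinite pro-$p$-group of finite coclass; $T=\gamma_\ell(S)$ ($\ell$ large), $T\cong\mathbb{Z}_p^d$, $P=S/T$ finite, $|P|=p^m$ (here $m$ is only the exponent of $|P|$ in the definition of $e$), the series $T_0=T$, $T_{i+1}=[T_i,S]$ with all indices $p$; $T$ an additive $P$-module via conjugation; $S=\mathrm{Ext}(\rho)$, $\rho\in Z^2(P,T)$. $\mathcal{L}$ = elementary abelian $L\leq P$ with $\rho_L\in B^2(L,T)$; $\mathcal{L}_\eta=\{L\in\mathcal{L}\mid\mathrm{res}^P_L(\eta)=0\in H^3(L,T)\}$. Coclass family: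 $e=3\log_p|P|$, $M_x=T/p^{x+e}T$; $pro_x: Z^2(P,T)\to Z^2(P,M_x)$ induced by projection with image $I^2(P,M_x)$; $J^2(P,M_x)$ image of $Z^2(P,p^{x+e-\log_p|P|}T/p^{x+e}T)\to Z^2(P,M_x)$ induced by inclusion; fixed complements $K^2(P,M_x)\leq J^2(P,M_x)$ of $I^2(P,M_x)$ in $Z^2(P,M_x)$ with $mul(K^2(P,M_x))=K^2(P,M_{x+1})$ ($mul$ induced by $t+p^{x+e}T\mapsto pt+p^{x+e+1}T$). The composite $Z^2(P,M_x)\to H^2(P,M_x)\to H^3(P,p^{x+e}T)\to H^3(P,T)$ (quotient, connecting map, division by $p^{x+e}$) restricts to an isomorphism on $K^2(P,M_x)$; $\eta_x$ is the preimage of $\eta$, $\rho_x=pro_x(\rho)$, $G_x=\mathrm{Ext}(\rho_x+\eta_x)$, $M_x=\{(1,m)\}$. For $L\in\mathcal{L}_\eta$, a complement $C_{L,x}=\{(l,t_{L,x}(l))\}$ to $M_x$ in the full preimage of $L$ in $G_x$ is fixed, and $C_{L,x}(\gamma)=\{(l,t_{L,x}(l)+\gamma(l))\}$ for $\gamma\in Z^1(L,M_x)$. $\mathcal{O}_x(L)$ is the set of elementary abelian subgroups of $M_x$ centralised by $L$. $\mathcal{A}_p(G_x)$ is the Quillen category: objects elementary abelian $p$-subgroups, morphisms $E\to F$ the maps $e\mapsto e^g$ with $g\in G_x$, $E^g\leq F$. *)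

(* Defs.v *)
From HB Require Import structures.
From mathcomp Require Import all_boot all_fingroup all_solvable all_algebra.
Set Implicit Arguments. Unset Strict Implicit. Unset Printing Implicit Defensive.
Import GRing.Theory.
Local Open Scope ring_scope.

Definition is_right_action (P : finGroupType) (M : zmodType)
  (act : M -> P -> M) : Prop :=
  [/\ forall m, act m 1%g = m,
      forall m g h, act m (g * h)%g = act (act m g) h
    & forall g m n, act (m + n) g = act m g + act n g].

Definition is_Z2 (P : finGroupType) (M : zmodType) (act : M -> P -> M)
  (s : P -> P -> M) : Prop :=
  [/\ forall g, s 1%g g = 0, forall g, s g 1%g = 0
    & forall g h k, act (s g h) k + s (g * h)%g k = s h k + s g (h * k)%g].

Definition is_Z1 (P : finGroupType) (M : zmodType) (act : M -> P -> M)
  (L : {set P}) (c : P -> M) : Prop :=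
  forall l l', l \in L -> l' \in L -> c (l * l')%g = act (c l) l' + c l'.

Section Ext.
Variables (P : finGroupType) (M : finZmodType) (act : M -> P -> M)
  (s : P -> P -> M).

Definition ext_one : P * M := (1%g, 0).
Definition ext_mul (a b : P * M) : P * M :=
  ((a.1 * b.1)%g, act a.2 b.1 + b.2 + s a.1 b.1).
Definition ext_inv (a : P * M) : P * M :=
  ((a.1)^-1%g, - act a.2 (a.1)^-1%g - s a.1 (a.1)^-1%g).
Definition ext_conj (a g : P * M) : P * M := ext_mul (ext_inv g) (ext_mul a g).
Definition ext_expn (a : P * M) (n : nat) : P * M :=
  iter n (ext_mul a) ext_one.

Definition is_ext_subgroup (S : {set P * M}) : Prop :=
  [/\ ext_one \in S,
      forall a b, a \in S -> b \in S -> ext_mul a b \in S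
    & forall a, a \in S -> ext_inv a \in S].

(* objects of the Quillen category A_p(Ext(s)): elementary abelian p-subgroups *)
Definition is_ext_elab (p : nat) (S : {set P * M}) : Prop :=
  [/\ is_ext_subgroup S,
      forall a b, a \in S -> b \in S -> ext_mul a b = ext_mul b a
    & forall a, a \in S -> ext_expn a p = ext_one].

Definition induces_hom (A B : {set P * M}) (g : P * M) : Prop :=
  forall a, a \in A -> ext_conj a g \in B.

Definition same_hom (A : {set P * M}) (g g' : P * M) : Prop :=
  forall a, a \in A -> ext_conj a g = ext_conj a g'.
End Ext.

(* The set {(l, c l) | l in L}, e.g. C_{L,x} (c = t) or C_{L,x}(gamma) (c = t + gamma). *)
Definition graph_set (P : finGroupType) (M : finZmodType) (L : {set P})
  (c : P -> M) : {set P * M} := [set (l, c l) | l in L].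

Definition prod_set (P : finGroupType) (M : finZmodType) (act : M -> P -> M)
  (s : P -> P -> M) (C : {set P * M}) (O : {set M}) : {set P * M} :=
  [set ext_mul act s c (1%g, o) | c in C, o in O].

Definition is_elab_M (M : finZmodType) (p : nat) (O : {set M}) : Prop :=
  [/\ 0 \in O, forall a b, a \in O -> b \in O -> a + b \in O
    & forall a, a \in O -> a *+ p = 0].

Definition centM (P : finGroupType) (M : finZmodType) (act : M -> P -> M)
  (L : {set P}) : {set M} := [set n | [forall l in L, act n l - n == 0]].

Definition centM_conj (P : finGroupType) (M : finZmodType) (act : M -> P -> M)
  (L : {set P}) (w : P) : {set M} := [set act n w | n in centM act L].

(* Main.v *)
Require Import Defs.
From HB Require Import structures.
From mathcomp Require Import all_boot all_fingroup all_solvable all_algebra.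
Import GRing.Theory.
Local Open Scope ring_scope.

Section Grp.
Variables (P : finGroupType) (M : finZmodType) (act : M -> P -> M) (s : P -> P -> M).
Hypothesis Hact : is_right_action act.
Hypothesis Hs : is_Z2 act s.
Local Notation mul := (ext_mul act s).
Local Notation inv := (ext_inv act s).

Lemma act0 g : act 0 g = 0.
Proof.
case: Hact => _ _ H3; have h := H3 g 0 0; rewrite addr0 in h.
apply: (addrI (act 0 g)); rewrite addr0; exact: esym h.
Qed.

Lemma actN x g : act (- x) g = - act x g.
Proof.
case: Hact => _ _ H3; apply: (addrI (act x g)).
by rewrite -H3 !subrr act0.
Qed.

Lemma mulA a b c : mul a (mul b c) = mul (mul a b) c.
Proof.
case: Hact Hs => H1 H2 H3 [_ _ C].
case: a => a1 a2; case: b => b1 b2; case: c => c1 c2; rewrite /ext_mul /=.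
congr pair; first by rewrite mulgA.
rewrite !H3 H2.
have := C a1 b1 c1 => E.
rewrite -!addrA; congr (_ + (_ + _)).
by rewrite [RHS]addrCA E.
Qed.

Lemma mulV a : mul a (inv a) = ext_one P M.
Proof.
case: Hact Hs => H1 H2 H3 [_ _ C].
case: a => a1 a2; rewrite /ext_mul /ext_inv /ext_one /=.
rewrite mulgV; congr pair; by rewrite addrA subrr add0r addNr.
Qed.

Lemma Vmul a : mul (inv a) a = ext_one P M.
Proof.
case: Hact Hs => H1 H2 H3 [S1 S2 C].
case: a => a1 a2; rewrite /ext_mul /ext_inv /ext_one /=.
rewrite mulVg; congr pair.
have := C a1 a1^-1%g a1; rewrite mulgV mulVg S1 S2 addr0 => E.
rewrite H3 actN -H2 mulVg H1 actN E.
by rewrite addr0 [_ - _ + a2]addrAC addNr add0r addNr.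
Qed.

Lemma mul1 a : mul (ext_one P M) a = a.
Proof.
case: Hs => S1 _ _; case: a => a1 a2; rewrite /ext_mul /ext_one /=.
by rewrite mul1g act0 add0r S1 addr0.
Qed.

Lemma mul1r a : mul a (ext_one P M) = a.
Proof.
case: Hact Hs => H1 _ _ [_ S2 _]; case: a => a1 a2; rewrite /ext_mul /ext_one /=.
by rewrite mulg1 H1 addr0 S2 addr0.
Qed.

Lemma mulKg x y : mul (inv x) (mul x y) = y.
Proof. by rewrite mulA Vmul mul1. Qed.
Lemma mulKVg x y : mul x (mul (inv x) y) = y.
Proof. by rewrite mulA mulV mul1. Qed.
Lemma mulgK x y : mul (mul y x) (inv x) = y.
Proof. by rewrite -mulA mulV mul1r. Qed.

Lemma conj_eq a g e :
  ext_conj act s a g = ext_conj act s a (mul e g) <-> mul e a = mul a e.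
Proof.
rewrite /ext_conj; split => H.
  have H' := f_equal (mul (mul e g)) H.
  rewrite mulKVg -mulA mulKVg mulA mulA in H'.
  have := f_equal (fun z => mul z (inv g)) H'; by rewrite !mulgK.
rewrite -[LHS](mulKg (mul e g)); congr mul.
by rewrite -mulA mulKVg mulA H -mulA.
Qed.
End Grp.

Theorem lemma5p7 (p : nat) (P : finGroupType) (M : finZmodType)
  (act : M -> P -> M) (s : P -> P -> M)
  (L : {group P}) (t gam : P -> M) (O : {set M}) (B : {set P * M})
  (w : P) (m m' : M) :
  prime p -> (p.-group [set: P])%g -> p.-nat #|M| ->
  is_right_action act ->
  is_Z2 act s ->
  (p.-abelem L)%g ->
  is_ext_subgroup act s (graph_set L t) ->
  is_Z1 act L gam ->
  is_elab_M p O -> (forall o l, o \in O -> l \in L -> act o l = o) ->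
  is_ext_elab act s p (prod_set act s (graph_set L (fun l => t l + gam l)) O) ->
  is_ext_elab act s p B ->
  induces_hom act s (prod_set act s (graph_set L (fun l => t l + gam l)) O) B (w, m) ->
  induces_hom act s (prod_set act s (graph_set L (fun l => t l + gam l)) O) B (w, m') ->
  (same_hom act s (prod_set act s (graph_set L (fun l => t l + gam l)) O) (w, m) (w, m')
   <-> m - m' \in centM_conj act L w).
Proof.
move=> _ _ _ Hact Hs _ _ _ [O0 _ _] _ _ _ _ _.
set A := prod_set _ _ _ _.
have [H1 H2 H3] := Hact; have [S1 S2 _] := Hs.
set d := act (m' - m) w^-1%g.
have Hd : act d w = m' - m by rewrite /d -H2 mulVg H1.
have Hg : (w, m') = ext_mul act s (1%g, d) (w, m).
  by rewrite /ext_mul /= mul1g Hd S1 addr0 subrK.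
have comm a : ext_mul act s (1%g, d) a = ext_mul act s a (1%g, d) <-> act d a.1 = d.
  case: a => a1 a2; rewrite /ext_mul /= mul1g mulg1 S1 S2 H1 !addr0; split.
    by case=> E; apply: (addIr a2); rewrite E addrC.
  by move=> ->; rewrite addrC.
have Aproj a : a \in A -> a.1 \in L.
  case/imset2P => c o /imsetP [l lL ->] _ -> /=; by rewrite mulg1.
have Asurj l : l \in L -> exists2 a, a \in A & a.1 = l.
  move=> lL; exists (ext_mul act s (l, t l + gam l) (1%g, 0)).
    by apply/imset2P; exists (l, t l + gam l) 0 => //; apply/imsetP; exists l.
  by rewrite /= mulg1.
rewrite /same_hom Hg; split.
  move=> H; apply/imsetP; exists (- d).
    rewrite inE; apply/forall_inP => l lL.
    have [a aA <-] := Asurj l lL.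
    have /(@conj_eq _ _ act s Hact Hs)/comm E := H a aA.
    by rewrite (@actN _ _ act Hact) E subrr.
  by rewrite (@actN _ _ act Hact) Hd opprB.
case/imsetP => n; rewrite inE => /forall_inP Hn Emn a aA.
apply/(@conj_eq _ _ act s Hact Hs)/comm.
have Ed : d = - n.
  by rewrite /d -opprB Emn (@actN _ _ act Hact) -H2 mulgV H1.
rewrite Ed (@actN _ _ act Hact); congr (- _).
by apply/eqP; rewrite -subr_eq0; exact: Hn (Aproj a aA).
Qed.
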